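(* Let $L\geq\delta\geq 2$ and let $G$ be an $(L,\delta)$-almost-biregular graph. Then $G$ has a $64$-almost-regular subgraph with average degree at least $\frac{\delta}{16\log L}$.
   Context: Logarithms are to base $2$. A graph is $K$-almost-regular if its maximum degree is at most $K$ times its minimum degree. A bipartite graph $G$ is $(L,d)$-almost-biregular if it has parts $A$ and $B$ (with $A$ non-empty) such that $d_G(v)=d$ for every $v\in B$, and, writing $D=e(G)/|A|$, we have $D\geq d$ (equivalently $|A|\leq|B|$) and $d_G(u)\leq LD$ for every $u\in A$. Subgraphs are required to be non-empty; average degree is $2e/|V|$. *)

(* Defs.v *)
From mathcomp Require Import all_boot.
From Stdlib Require Import Reals.
Set Implicit Arguments. Unset Strict Implicit. Unset Printing Implicit Defensive.

Definition log2 (x : R) : R := (ln x / ln 2)%R.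

Section Graphs.
Variable T : finType.

Definition simple_graph (e : rel T) : Prop :=
  (forall x y, e x y = e y x) /\ (forall x, e x x = false).

Definition deg_in (S : {set T}) (F : rel T) (x : T) : nat :=
  #|[set y in S | F x y]|.

Definition nedges_in (S : {set T}) (F : rel T) : R :=
  (INR #|[set p : T * T | [&& p.1 \in S, p.2 \in S & F p.1 p.2]]| / 2)%R.

Definition is_subgraph (e : rel T) (S : {set T}) (F : rel T) : Prop :=
  S != set0 /\ (forall x y, F x y = F y x) /\
  (forall x y, x \in S -> y \in S -> F x y -> e x y).

Definition avg_deg (S : {set T}) (F : rel T) : R :=
  (2 * nedges_in S F / INR #|S|)%R.

Definition almost_regular (K : R) (S : {set T}) (F : rel T) : Prop :=
  forall x y, x \in S -> y \in S ->
    (INR (deg_in S F x) <= K * INR (deg_in S F y))%R.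

Definition almost_biregular (L : R) (d : nat) (e : rel T) : Prop :=
  exists A B : {set T},
    A != set0 /\ [disjoint A & B] /\ A :|: B = setT /\
        (forall x y, e x y -> (x \in A /\ y \in B) \/ (x \in B /\ y \in A)) /\
        (forall v, v \in B -> deg_in setT e v = d) /\
        (INR d <= nedges_in setT e / INR #|A|)%R /\
        (forall u, u \in A ->
           (INR (deg_in setT e u) <= L * (nedges_in setT e / INR #|A|))%R).
End Graphs.

(* Main.v *)
Require Import Defs.
From mathcomp Require Import all_boot.
From Stdlib Require Import Reals.
From Stdlib Require Import Lra Lia Classical ZArith.
From mathcomp Require Import all_boot zify.
Delimit Scope R_scope with R.
Set Implicit Arguments. Unset Strict Implicit. Unset Printing Implicit Defensive.

Lemma card_pairs (X Y : finType) (f : X -> Y -> bool) :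
  #|[set p : X * Y | f p.1 p.2]| = \sum_(x : X) #|[set y | f x y]|.
Proof.
have H := pair_big_dep xpredT f (fun _ _ => 1).
rewrite -sum1_card (eq_bigl (fun p => xpredT p.1 && f p.1 p.2)); last by move=> p; rewrite inE.
rewrite -H.
apply: eq_bigr => x _; rewrite -sum1_card; apply: eq_bigl => y; by rewrite inE.
Qed.

Lemma card_pairs2 (X Y : finType) (f : X -> Y -> bool) :
  #|[set p : X * Y | f p.1 p.2]| = \sum_(y : Y) #|[set x | f x y]|.
Proof.
rewrite card_pairs.
have E1 : forall x, #|[set y | f x y]| = \sum_(y : Y) (f x y : nat).
  by move=> x; rewrite -sum1_card big_mkcond; apply: eq_bigr => y _; rewrite inE; case: (f x y).
have E2 : forall y, #|[set x | f x y]| = \sum_(x : X) (f x y : nat).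
  by move=> y; rewrite -sum1_card big_mkcond; apply: eq_bigr => x _; rewrite inE; case: (f x y).
under eq_bigr => x _ do rewrite E1.
under [RHS]eq_bigr => y _ do rewrite E2.
exact: exchange_big.
Qed.

Lemma sum_cond_card (X Y : finType) (P : pred X) (Q : X -> Y -> bool) :
  \sum_(x : X) #|[set y | P x && Q x y]| = \sum_(x | P x) #|[set y | Q x y]|.
Proof.
rewrite [RHS]big_mkcond; apply: eq_bigr => x _; case: (P x) => //.
by apply/eqP; rewrite cards_eq0; apply/eqP/setP => y; rewrite !inE.
Qed.

Lemma INR_addn m n : INR (m + n) = (INR m + INR n)%R.
Proof. exact: plus_INR. Qed.
Lemma INR_muln m n : INR (m * n) = (INR m * INR n)%R.
Proof. exact: mult_INR. Qed.
Lemma INR_len m n : m <= n -> (INR m <= INR n)%R.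
Proof. move=> H; apply: le_INR; lia. Qed.
Lemma INR_ltn m n : m < n -> (INR m < INR n)%R.
Proof. move=> H; apply: lt_INR; lia. Qed.
Lemma INR_len_inv m n : (INR m <= INR n)%R -> m <= n.
Proof. move=> H; have := INR_le _ _ H; lia. Qed.
Lemma INR_ltn_inv m n : (INR m < INR n)%R -> m < n.
Proof. move=> H; have := INR_lt _ _ H; lia. Qed.

Lemma sum_le_R (I : finType) (P : pred I) (f : I -> nat) (x : R) :
  (forall i, P i -> INR (f i) <= x)%R ->
  (INR (\sum_(i | P i) f i) <= INR #|P| * x)%R.
Proof.
move=> H; rewrite -sum1_card.
elim/big_ind2: _ => //.
- rewrite /=; lra.
- move=> a b c d H1 H2; rewrite !INR_addn; lra.
- move=> i Pi; rewrite /= Rmult_1_l; exact: H.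
Qed.

Lemma sum_ge_R (I : finType) (P : pred I) (f : I -> nat) (x : R) :
  (forall i, P i -> x <= INR (f i))%R ->
  (INR #|P| * x <= INR (\sum_(i | P i) f i))%R.
Proof.
move=> H; rewrite -sum1_card.
elim/big_ind2: _ => //.
- rewrite /=; lra.
- move=> a b c d H1 H2; rewrite !INR_addn; lra.
- move=> i Pi; rewrite /= Rmult_1_l; exact: H.
Qed.

Lemma sum_lt_R (N : nat) (f : 'I_N -> nat) (x : R) :
  0 < N -> (forall i, INR (f i) < x)%R ->
  (INR (\sum_(i < N) f i) < INR N * x)%R.
Proof.
elim: N f => [//|N IH] f _ H.
rewrite big_ord_recr INR_addn S_INR.
case: N IH f H => [|N] IH f H.
  rewrite big_ord0 INR_0; have := H ord_max; lra.
move: (H ord_max) (IH (fun i => f (widen_ord (leqnSn _) i)) isT (fun i => H _)) => h1 h2.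
change (INR (\sum_(i < N.+1) f (widen_ord (leqnSn N.+1) i)) + INR (f ord_max) < (INR N.+1 + 1) * x)%R.
lra.
Qed.

Lemma exists_max (X : finType) (P : pred X) (f : X -> nat) (x0 : X) :
  P x0 -> exists x, P x /\ forall y, P y -> f y <= f x.
Proof.
move=> Px0; case: (arg_maxnP f Px0) => x Px Hx.
by exists x; split.
Qed.

Lemma exists_subset (T : finType) (Y : {set T}) n :
  n <= #|Y| -> exists X : {set T}, X \subset Y /\ #|X| = n.
Proof.
elim: n => [|n IH] H.
  by exists set0; rewrite sub0set cards0.
have [X [XY cX]] := IH (ltnW H).
have : Y :\: X != set0.
  rewrite -card_gt0 cardsD; have := subset_leq_card XY.
  have -> : #|Y :&: X| = #|X| by rewrite setIC (setIidPl XY).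
  lia.
case/set0Pn => y; rewrite inE => /andP[yX yY].
exists (y |: X); split.
  by apply/subsetP => z; rewrite !inE => /orP[/eqP -> //|/(subsetP XY)].
by rewrite cardsU1 yX cX.
Qed.

Lemma sum_bool_card (T : finType) (A : {set T}) (b : pred T) :
  \sum_(x in A) (b x : nat) = #|[set x in A | b x]|.
Proof.
rewrite -sum1_card [RHS]big_mkcond [LHS]big_mkcond; apply: eq_bigr => x _.
by rewrite !inE; case: (x \in A); case: (b x).
Qed.

Lemma deg_removal (T : finType) (F : rel T) (S0 : {set T}) v x :
  v \in S0 -> deg_in S0 F x = deg_in (S0 :\ v) F x + F x v.
Proof.
move=> vS; rewrite /deg_in (cardsD1 v) addnC; congr (_ + _).
  by apply: eq_card => y; rewrite !inE andbA.
by rewrite !inE vS.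
Qed.

Lemma peel (T : finType) (F : rel T) (Fsym : forall x y, F x y = F y x) (t : nat) :
  forall n (S0 : {set T}), #|S0| = n ->
  2 * (t - 1) * #|S0| < \sum_(x in S0) deg_in S0 F x ->
  exists S : {set T}, S \subset S0 /\ S != set0 /\ forall x, x \in S -> t <= deg_in S F x.
Proof.
elim=> [|n IH] S0 cS Hs.
  move/eqP: cS; rewrite cards_eq0 => /eqP E; move: Hs; rewrite E big_set0 cards0; lia.
case: (boolP [forall x in S0, t <= deg_in S0 F x]) => [/forall_inP Hall|].
  exists S0; split; first exact: subxx.
  by split; [rewrite -card_gt0 cS|].
rewrite negb_forall_in => /existsP[v /andP[vS]]; rewrite -ltnNge => Hv.
have cS' : #|S0 :\ v| = n by move: cS; rewrite (cardsD1 v) vS; lia.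
have Hsum : \sum_(x in S0) deg_in S0 F x <=
            2 * deg_in S0 F v + \sum_(x in S0 :\ v) deg_in (S0 :\ v) F x.
  rewrite (big_setD1 v vS) /=.
  rewrite (eq_bigr (fun x => deg_in (S0 :\ v) F x + F x v)); last first.
    by move=> x _; apply: deg_removal.
  rewrite big_split /= sum_bool_card.
  have : #|[set x in S0 :\ v | F x v]| <= deg_in S0 F v.
    apply: subset_leq_card; apply/subsetP => y; rewrite !inE Fsym.
    by case/andP => /andP[_ ->] ->.
  lia.
have [S [SS [S0n Sd]]] := IH (S0 :\ v) cS'
  ltac:(move: Hs Hsum Hv; rewrite cS cS'; nia).
exists S; split => //.
apply: subset_trans SS _; exact: subD1set.
Qed.

Definition dA (T : finType) (E : {set T * T}) (a : T) := #|[set b | (a, b) \in E]|.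
Definition dB (T : finType) (E : {set T * T}) (b : T) := #|[set a | (a, b) \in E]|.

Definition validb (T : finType) (e : rel T) (Aj B : {set T}) (C R0 : nat)
  (E : {set T * T}) : bool :=
  [&& [forall p in E, [&& p.1 \in Aj, p.2 \in B & e p.1 p.2]],
      [forall a, dA E a <= C], [forall b, dB E b <= C] &
      [forall b, (dB E b == 0) || (R0 <= dB E b)]].

Definition Xs (T : finType) (b : T) (Xa : {set T}) : {set T * T} :=
  [set p | (p.1 \in Xa) && (p.2 == b)].

Lemma dA_add (T : finType) (E : {set T * T}) b (Xa : {set T}) x :
  (forall a, a \in Xa -> (a, b) \notin E) ->
  dA (E :|: Xs b Xa) x = dA E x + (x \in Xa).
Proof.
move=> H; rewrite /dA.
case: (boolP (x \in Xa)) => xX.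
  have -> : [set y | (x, y) \in E :|: Xs b Xa] = b |: [set y | (x, y) \in E].
    by apply/setP => y; rewrite !inE /= xX andTb orbC.
  by rewrite cardsU1 inE (negbTE (H _ xX)) addnC.
rewrite addn0; apply: eq_card => y; rewrite !inE /= (negbTE xX) orbF.
by [].
Qed.

Lemma dB_add (T : finType) (E : {set T * T}) b (Xa : {set T}) y :
  (forall a, a \in Xa -> (a, b) \notin E) ->
  dB (E :|: Xs b Xa) y = dB E y + (if y == b then #|Xa| else 0).
Proof.
move=> H; rewrite /dB.
case: (eqVneq y b) => [->|yb].
  have -> : [set a | (a, b) \in E :|: Xs b Xa] = [set a | (a, b) \in E] :|: Xa.
    by apply/setP => a; rewrite !inE /= eqxx andbT.
  rewrite cardsU.
  have -> : [set a | (a, b) \in E] :&: Xa = set0.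
    apply/setP => a; rewrite !inE; apply/negP => /andP[aE aX].
    by move: (H _ aX); rewrite aE.
  by rewrite cards0 subn0.
rewrite addn0; apply: eq_card => a; rewrite !inE /= (negbTE yb) andbF orbF.
by [].
Qed.

Lemma card_Xs (T : finType) b (Xa : {set T}) : #|Xs b Xa| = #|Xa|.
Proof.
rewrite /Xs (card_pairs (fun x y => (x \in Xa) && (y == b))).
rewrite (sum_cond_card (fun x => x \in Xa) (fun _ y => y == b)).
rewrite -[RHS]sum1_card; apply: eq_bigr => x _.
by rewrite (eq_card (B := [set b])) ?cards1 // => y; rewrite !inE.
Qed.

Lemma add_star (T : finType) (e : rel T) (Aj B : {set T}) (C R0 : nat)
  (E : {set T * T}) b (Xa : {set T}) :
  validb e Aj B C R0 E -> b \in B ->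
  (forall a, a \in Xa -> [&& a \in Aj, e a b, dA E a < C & (a, b) \notin E]) ->
  dB E b + #|Xa| <= C -> R0 <= dB E b + #|Xa| ->
  validb e Aj B C R0 (E :|: Xs b Xa) /\ #|E :|: Xs b Xa| = #|E| + #|Xa|.
Proof.
move=> /and4P[/forall_inP H1 /forallP H2 /forallP H3 /forallP H4] bB HX HC HR.
have Hn : forall a, a \in Xa -> (a, b) \notin E.
  by move=> a /HX /and4P[].
split.
  apply/and4P; split.
  - apply/forall_inP => p; rewrite !inE => /orP[/H1 //|/andP[pX /eqP pb]].
    by rewrite pb; move: (HX _ pX) => /and4P[-> -> _ _]; rewrite bB.
  - apply/forallP => x; rewrite dA_add //.
    case: (boolP (x \in Xa)) => xX; last by rewrite addn0.
    by move: (HX _ xX) => /and4P[_ _ ? _]; rewrite addn1.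
  - apply/forallP => y; rewrite dB_add //.
    by case: (eqVneq y b) => [->//|_]; rewrite addn0.
  - apply/forallP => y; rewrite dB_add //.
    case: (eqVneq y b) => [->|_]; last by rewrite addn0.
    by rewrite HR orbT.
rewrite cardsU card_Xs.
have -> : E :&: Xs b Xa = set0.
  apply/setP => p; rewrite !inE; apply/negP => /andP[pE /andP[pX /eqP pb]].
  by move: (Hn _ pX); rewrite -pb -surjective_pairing pE.
by rewrite cards0 subn0.
Qed.

Definition Uset (T : finType) (e : rel T) (Aj : {set T}) (C : nat) (E : {set T * T}) b :=
  [set a in Aj | e a b && (dA E a < C)].

Lemma valid_dB_pos (T : finType) (e : rel T) (Aj B : {set T}) (C R0 : nat) (E : {set T * T}) b :
  validb e Aj B C R0 E -> 0 < dB E b -> R0 <= dB E b.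
Proof.
move=> /and4P[_ _ _ /forallP H4] Hp; move: (H4 b); case: eqP => //= H; lia.
Qed.

Lemma M1 (T : finType) (e : rel T) (Aj B : {set T}) (C R0 : nat) (E : {set T * T}) a b :
  validb e Aj B C R0 E -> (forall E', validb e Aj B C R0 E' -> #|E'| <= #|E|) ->
  a \in Aj -> b \in B -> e a b -> (a, b) \notin E -> 0 < dB E b ->
  dA E a < C -> dB E b < C -> False.
Proof.
move=> V Emax aA bB eab abE Hp HaC HbC.
have [V' c'] := @add_star T e Aj B C R0 E b [set a] V bB
  ltac:(by move=> x; rewrite inE => /eqP ->; rewrite aA eab HaC abE)
  ltac:(by rewrite cards1; lia)
  ltac:(rewrite cards1; have := valid_dB_pos V Hp; lia).
have := Emax _ V'; rewrite c' cards1; lia.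
Qed.

Lemma M2 (T : finType) (e : rel T) (Aj B : {set T}) (C R0 : nat) (E : {set T * T}) b :
  validb e Aj B C R0 E -> (forall E', validb e Aj B C R0 E' -> #|E'| <= #|E|) ->
  0 < R0 -> R0 <= C -> b \in B -> dB E b = 0 -> #|Uset e Aj C E b| < R0.
Proof.
move=> V Emax R0p R0C bB Hb0; rewrite ltnNge; apply/negP => HU.
have [X [XU cX]] := exists_subset HU.
have Hn : forall a, (a, b) \notin E.
  move=> a; apply/negP => abE.
  have : 0 < dB E b by rewrite /dB card_gt0; apply/set0Pn; exists a; rewrite inE.
  lia.
have [V' c'] := @add_star T e Aj B C R0 E b X V bB
  ltac:(move=> x /(subsetP XU); rewrite !inE => /andP[-> /andP[-> ->]]; by rewrite Hn)
  ltac:(by rewrite Hb0 cX)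
  ltac:(by rewrite Hb0 cX).
have := Emax _ V'; rewrite c' cX; lia.
Qed.

Lemma count_main (T : finType) (e : rel T) (Aj B : {set T}) (C R0 : nat) (E : {set T * T}) :
  (forall x y, e x y = e y x) ->
  (forall a b, a \in Aj -> e a b -> b \in B) ->
  validb e Aj B C R0 E -> (forall E', validb e Aj B C R0 E' -> #|E'| <= #|E|) ->
  \sum_(a in Aj) #|[set y | e a y]| <=
  #|E| + \sum_(a | (a \in Aj) && (C <= dA E a)) #|[set y | e a y]|
       + \sum_(b | C <= dB E b) #|[set y | e b y]|
       + \sum_(b | (b \in B) && (dB E b == 0)) #|Uset e Aj C E b|.
Proof.
move=> esym cross V Emax.
set P0 := [set p : T * T | (p.1 \in Aj) && e p.1 p.2].
set P1 := [set p : T * T | ((p.1 \in Aj) && (C <= dA E p.1)) && e p.1 p.2].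
set P2 := [set p : T * T | (C <= dB E p.2) && e p.1 p.2].
set P3 := [set p : T * T | ((p.2 \in B) && (dB E p.2 == 0)) && (p.1 \in Uset e Aj C E p.2)].
have c0 : #|P0| = \sum_(a in Aj) #|[set y | e a y]|.
  by rewrite (card_pairs (fun x y => (x \in Aj) && e x y)) sum_cond_card.
have c1 : #|P1| = \sum_(a | (a \in Aj) && (C <= dA E a)) #|[set y | e a y]|.
  by rewrite (card_pairs (fun x y => ((x \in Aj) && (C <= dA E x)) && e x y)) sum_cond_card.
have c2 : #|P2| = \sum_(b | C <= dB E b) #|[set y | e b y]|.
  rewrite (card_pairs2 (fun x y => (C <= dB E y) && e x y)).
  rewrite (sum_cond_card (fun y => C <= dB E y) (fun y x => e x y)).
  by apply: eq_bigr => y _; apply: eq_card => x; rewrite !inE esym.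
have c3 : #|P3| = \sum_(b | (b \in B) && (dB E b == 0)) #|Uset e Aj C E b|.
  rewrite (card_pairs2 (fun x y => ((y \in B) && (dB E y == 0)) && (x \in Uset e Aj C E y))).
  rewrite (sum_cond_card (fun y => (y \in B) && (dB E y == 0)) (fun y x => x \in Uset e Aj C E y)).
  by apply: eq_bigr => y _; apply: eq_card => x; rewrite !inE.
have sub : P0 \subset E :|: P1 :|: P2 :|: P3.
  apply/subsetP => [[a b]]; rewrite !inE /= => /andP[aA eab].
  have bB := cross _ _ aA eab.
  case: (boolP ((a, b) \in E)) => abE.
    by apply/orP; left; apply/orP; left; apply/orP; left.
  case: (boolP (C <= dA E a)) => HaC.
    by apply/orP; left; apply/orP; left; apply/orP; right; rewrite aA eab.
  case: (boolP (C <= dB E b)) => HbC.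
    by apply/orP; left; apply/orP; right; rewrite eab.
  have Hb0 : dB E b == 0.
    apply/negP => /eqP Hb; apply: (M1 V Emax aA bB eab abE); lia.
  by apply/orP; right; rewrite bB Hb0 aA eab /= ltnNge HaC.
have := subset_leq_card sub.
have h1 := (leq_card_setU (E :|: P1 :|: P2) P3).1.
have h2 := (leq_card_setU (E :|: P1) P2).1.
have h3 := (leq_card_setU E P1).1.
rewrite -c0 -c1 -c2 -c3 => hh.
apply: (leq_trans hh); apply: (leq_trans h1); rewrite leq_add2r.
apply: (leq_trans h2); rewrite leq_add2r; exact: h3.
Qed.

Lemma cardE_dA (T : finType) (E : {set T * T}) : #|E| = \sum_x dA E x.
Proof.
rewrite -(card_pairs (fun x y => (x, y) \in E)); apply: eq_card => p.
by rewrite inE -surjective_pairing.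
Qed.

Lemma cardE_dB (T : finType) (E : {set T * T}) : #|E| = \sum_y dB E y.
Proof.
rewrite -(card_pairs2 (fun x y => (x, y) \in E)); apply: eq_card => p.
by rewrite inE -surjective_pairing.
Qed.

Lemma sum_sub_le (I : finType) (P : pred I) (f : I -> nat) :
  \sum_(i | P i) f i <= \sum_i f i.
Proof. rewrite big_mkcond; apply: leq_sum => i _; by case: (P i). Qed.

Lemma dA_pos (T : finType) (e : rel T) Aj B C R0 (E : {set T * T}) x :
  validb e Aj B C R0 E -> 0 < dA E x -> x \in Aj.
Proof.
move=> /and4P[/forall_inP H1 _ _ _]; rewrite /dA card_gt0 => /set0Pn[y].
by rewrite inE => /H1 /and3P[].
Qed.

Lemma dB_pos (T : finType) (e : rel T) Aj B C R0 (E : {set T * T}) x :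
  validb e Aj B C R0 E -> 0 < dB E x -> x \in B.
Proof.
move=> /and4P[/forall_inP H1 _ _ _]; rewrite /dB card_gt0 => /set0Pn[y].
by rewrite inE => /H1 /and3P[].
Qed.

Lemma dA_le (T : finType) (e : rel T) Aj B C R0 (E : {set T * T}) x :
  validb e Aj B C R0 E -> dA E x <= C.
Proof. by move=> /and4P[_ /forallP H _ _]. Qed.
Lemma dB_le (T : finType) (e : rel T) Aj B C R0 (E : {set T * T}) x :
  validb e Aj B C R0 E -> dB E x <= C.
Proof. by move=> /and4P[_ _ /forallP H _]. Qed.

Definition Fr (T : finType) (E : {set T * T}) : rel T :=
  fun x y => ((x, y) \in E) || ((y, x) \in E).

Lemma one_zero (T : finType) (e : rel T) (Aj B : {set T}) C R0 (E : {set T * T}) x :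
  validb e Aj B C R0 E -> [disjoint Aj & B] -> dA E x = 0 \/ dB E x = 0.
Proof.
move=> V D.
case: (posnP (dA E x)) => [->|h1]; first by left.
case: (posnP (dB E x)) => [->|h2]; first by right.
have xA := dA_pos V h1; have xB := dB_pos V h2.
by move: D; rewrite disjoint_subset => /subsetP /(_ _ xA); rewrite inE xB.
Qed.

Lemma deg_Fr_le (T : finType) (e : rel T) (Aj B : {set T}) C R0 (E : {set T * T}) (S : {set T}) x :
  validb e Aj B C R0 E -> [disjoint Aj & B] -> deg_in S (Fr E) x <= C.
Proof.
move=> V D; rewrite /deg_in.
have sub : [set y in S | Fr E x y] \subset [set y | (x, y) \in E] :|: [set y | (y, x) \in E].
  by apply/subsetP => y; rewrite !inE /Fr => /andP[_ ->].
have := subset_leq_card sub; have := (leq_card_setU [set y | (x, y) \in E] [set y | (y, x) \in E]).1.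
have := dA_le x V; have := dB_le x V; rewrite /dA /dB.
case: (one_zero x V D); rewrite /dA /dB => ->; lia.
Qed.

Lemma deg_Fr_ge (T : finType) (e : rel T) (Aj B : {set T}) C R0 (E : {set T * T}) (S : {set T}) x :
  validb e Aj B C R0 E -> [disjoint Aj & B] ->
  (forall p, p \in E -> (p.1 \in S) && (p.2 \in S)) ->
  dA E x + dB E x <= deg_in S (Fr E) x.
Proof.
move=> V D HS; rewrite /deg_in.
case: (one_zero x V D) => ->; rewrite ?add0n ?addn0; apply: subset_leq_card;
  apply/subsetP => y; rewrite !inE /Fr.
  by move=> h; move: (HS _ h) => /= /andP[-> _]; rewrite h orbT.
by move=> h; move: (HS _ h) => /= /andP[_ ->]; rewrite h.
Qed.

Lemma sum_Fr_ge (T : finType) (e : rel T) (Aj B : {set T}) C R0 (E : {set T * T}) (S : {set T}) :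
  validb e Aj B C R0 E -> [disjoint Aj & B] ->
  (forall p, p \in E -> (p.1 \in S) && (p.2 \in S)) ->
  2 * #|E| <= \sum_(x in S) deg_in S (Fr E) x.
Proof.
move=> V D HS.
have H1 : \sum_(x in S) (dA E x + dB E x) <= \sum_(x in S) deg_in S (Fr E) x.
  by apply: leq_sum => x _; exact: (deg_Fr_ge x V D HS).
apply: leq_trans H1; rewrite big_split /=.
have HA : \sum_(x in S) dA E x = \sum_x dA E x.
  rewrite [RHS](bigID (fun x => x \in S)) /= [X in _ = _ + X]big1 ?addn0 //.
  move=> x xS; apply/eqP; rewrite /dA cards_eq0; apply/eqP/setP => y; rewrite !inE.
  by apply/negP => /HS /andP[/= xS' _]; rewrite xS' in xS.
have HB : \sum_(x in S) dB E x = \sum_x dB E x.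
  rewrite [RHS](bigID (fun x => x \in S)) /= [X in _ = _ + X]big1 ?addn0 //.
  move=> x xS; apply/eqP; rewrite /dB cards_eq0; apply/eqP/setP => y; rewrite !inE.
  by apply/negP => /HS /andP[_ /= xS']; rewrite xS' in xS.
by rewrite HA HB -cardE_dA -cardE_dB mul2n -addnn.
Qed.

Lemma pairs_deg (T : finType) (S : {set T}) (F : rel T) :
  #|[set p : T * T | [&& p.1 \in S, p.2 \in S & F p.1 p.2]]| = \sum_(x in S) deg_in S F x.
Proof.
rewrite (card_pairs (fun x y => [&& x \in S, y \in S & F x y])).
rewrite (sum_cond_card (fun x => x \in S) (fun x y => (y \in S) && F x y)).
by apply: eq_bigr => x _; rewrite /deg_in.
Qed.

Definition leRb (x y : R) : bool := if Rle_dec x y then true else false.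
Definition ltRb (x y : R) : bool := if Rlt_dec x y then true else false.
Lemma leRbP x y : reflect (x <= y)%R (leRb x y).
Proof. rewrite /leRb; case: Rle_dec => h; [by left | by right]. Qed.
Lemma ltRbP x y : reflect (x < y)%R (ltRb x y).
Proof. rewrite /ltRb; case: Rlt_dec => h; [by left | by right]. Qed.

Definition cls (k : R) (n : nat) : bool := leRb k (INR n) && ltRb (INR n) (4 * k).

Lemma floor_nat (x : R) : (0 <= x)%R -> exists n : nat, (INR n <= x < INR n + 1)%R.
Proof.
move=> x0; have [h1 h2] := archimed x.
have z1 : (1 <= up x)%Z.
  have : (0 < IZR (up x))%R by lra.
  move/lt_0_IZR; lia.
exists (Z.to_nat (up x - 1)).
rewrite INR_IZR_INZ Z2Nat.id; last by lia.
rewrite minus_IZR; lra.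
Qed.

Lemma ceil_nat (x : R) : (0 <= x)%R -> exists n : nat, (INR n - 1 < x <= INR n)%R.
Proof.
move=> x0; have [n [h1 h2]] := floor_nat x0.
case: (Req_dec (INR n) x) => h.
  exists n; lra.
exists n.+1; rewrite S_INR; lra.
Qed.

Lemma log2_ge1 (L : R) : (2 <= L)%R -> (1 <= log2 L)%R.
Proof.
move=> hL; rewrite /log2.
have l2 := ln_lt_2.
have : (ln 2 <= ln L)%R.
  case: (Req_dec L 2) => [->|h]; first lra.
  apply: Rlt_le; apply: ln_increasing; lra.
move=> h; apply (Rmult_le_reg_r (ln 2)); first lra.
field_simplify; lra.
Qed.

Lemma pow4_big (L : R) (N : nat) : (2 <= L)%R -> (log2 L + 1 < 2 * INR N)%R ->
  (2 * L < 4 ^ N)%R.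
Proof.
move=> hL hN.
have l2 := ln_lt_2.
have e4 : (4 ^ N = 2 ^ (2 * N))%R.
  rewrite pow_mult; congr (_ ^ _)%R; rewrite /=; lra.
rewrite e4; apply: ln_lt_inv; try lra.
  apply: pow_lt; lra.
rewrite ln_pow; last lra.
rewrite ln_mult; try lra.
have : (ln L = log2 L * ln 2)%R by rewrite /log2; field; lra.
move=> ->; rewrite mult_INR /=.
have : ((log2 L + 1) * ln 2 < (2 * INR N) * ln 2)%R by apply: Rmult_lt_compat_r; lra.
lra.
Qed.

Lemma find_class (D x : R) : (0 < D)%R -> forall n : nat,
  (D / 2 <= x < D / 2 * 4 ^ n)%R -> exists i : nat, (i < n)%N /\
  (D / 2 * 4 ^ i <= x < 4 * (D / 2 * 4 ^ i))%R.
Proof.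
move=> D0; elim=> [|n IH] [h1 h2].
  move: h2; rewrite /=; lra.
case: (Rlt_le_dec x (D / 2 * 4 ^ n)) => h.
  have [i [i1 i2]] := IH (conj h1 h).
  by exists i; split => //; lia.
exists n; split; first by [].
split => //; move: h2; rewrite /=; lra.
Qed.

Lemma pigeon (T : finType) (A : {set T}) (d : T -> nat) (L : R) :
  (0 < #|A|)%N -> (0 < INR (\sum_(a in A) d a))%R -> (2 <= L)%R ->
  (forall a, a \in A -> INR (d a) <= L * (INR (\sum_(a in A) d a) / INR #|A|))%R ->
  exists k : R, (INR (\sum_(a in A) d a) / INR #|A| / 2 <= k)%R /\
    (INR (\sum_(a in A) d a) / (4 * log2 L) <= INR (\sum_(a in A | cls k (d a)) d a))%R.
Proof.
move=> A0 m0 L2 Hmax.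
set M := \sum_(a in A) d a in m0 Hmax *.
set m := INR M in m0 Hmax *.
have cA : (0 < INR #|A|)%R by apply: (INR_ltn (m := 0)).
set D := (m / INR #|A|)%R in Hmax *.
have D0 : (0 < D)%R by rewrite /D; apply: Rdiv_lt_0_compat.
have l1 := log2_ge1 L2.
have [n0 [hn1 hn2]] := @floor_nat ((log2 L + 1) / 2) ltac:(lra).
set N := n0.+1.
have hN : INR N = (INR n0 + 1)%R by rewrite /N S_INR.
have p4 := @pow4_big L N L2 ltac:(rewrite hN; lra).
set ki := fun i : nat => (D / 2 * 4 ^ i)%R.
set mi := fun i : 'I_N => \sum_(a in A | cls (ki i) (d a)) d a.
set P := fun a => leRb (D / 2) (INR (d a)).
have step_a : \sum_(i < N) mi i =
   \sum_(a in A) \sum_(i < N) (if cls (ki i) (d a) then d a else 0).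
  rewrite exchange_big; apply: eq_bigr => i _; rewrite /mi.
  by rewrite big_mkcondr.
have step_b : \sum_(a in A | P a) d a <= \sum_(i < N) mi i.
  rewrite step_a big_mkcondr; apply: leq_sum => a aA.
  case: (boolP (P a)) => // /leRbP Pa.
  have hx : (INR (d a) < D / 2 * 4 ^ N)%R.
    have := Hmax a aA.
    have : (L * D < D / 2 * 4 ^ N)%R.
      have : (D * (2 * L) < D * 4 ^ N)%R by apply: Rmult_lt_compat_l.
      lra.
    lra.
  have [i [iN hi]] := find_class D0 (conj Pa hx).
  rewrite (bigD1 (Ordinal iN)) //=.
  have -> : cls (ki i) (d a).
    by rewrite /cls /ki; apply/andP; split; [apply/leRbP|apply/ltRbP]; lra.
  by apply: leq_addr.
have step_c : (INR (\sum_(a in A | ~~ P a) d a) <= m / 2)%R.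
  apply: Rle_trans (sum_le_R (x := (D / 2)%R) _) _.
    by move=> a /andP[_ /leRbP h]; lra.
  have : (#|[pred a | (a \in A) && ~~ P a]| <= #|A|)%N.
    by apply: subset_leq_card; apply/subsetP => x; rewrite !inE => /andP[].
  move/INR_len => h.
  have -> : (m / 2 = INR #|A| * (D / 2))%R by rewrite /D; field; lra.
  apply: Rmult_le_compat_r; first lra.
  exact: h.
have claim1 : (m / 2 <= INR (\sum_(i < N) mi i))%R.
  have eM : M = \sum_(a in A | P a) d a + \sum_(a in A | ~~ P a) d a.
    by rewrite /M (bigID P).
  have := INR_len step_b.
  have : m = (INR (\sum_(a in A | P a) d a) + INR (\sum_(a in A | ~~ P a) d a))%R.
    by rewrite /m eM INR_addn.
  lra.
have NP : (0 < INR N)%R by rewrite hN; have := pos_INR n0; lra.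
have [i hi] : exists i : 'I_N, (m / (2 * INR N) <= INR (mi i))%R.
  apply: NNPP => hn.
  have hall : forall i : 'I_N, (INR (mi i) < m / (2 * INR N))%R.
    move=> i; apply: Rnot_le_lt => h; apply: hn; by exists i.
  have := sum_lt_R (isT : (0 < N)%N) hall.
  have -> : (INR N * (m / (2 * INR N)) = m / 2)%R by field; lra.
  lra.
exists (ki i); split.
  rewrite /ki -/D.
  have : (1 <= 4 ^ i)%R by apply: pow_R1_Rle; lra.
  move=> h; have : (D / 2 * 1 <= D / 2 * 4 ^ i)%R by apply: Rmult_le_compat_l; lra.
  lra.
apply: Rle_trans hi.
rewrite /Rdiv; apply: Rmult_le_compat_l; first lra.
apply: Rinv_le_contravar; first lra.
rewrite hN; lra.
Qed.

Section RealCore.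
Local Open Scope R_scope.
Lemma real_core (e_ Sa Sb SA SB U0 mj aj BE Bn m d k C R0 tau l : R) :
  mj <= e_ + SA + SB + U0 ->
  SA <= Sa * (4 * k) -> Sa * C <= e_ ->
  SB <= Sb * d -> Sb * C <= e_ ->
  U0 <= Bn * (R0 - 1) -> BE * R0 <= e_ ->
  aj * k <= mj -> m = d * Bn -> m / (4 * l) <= mj ->
  d / 2 <= k -> tau = d / (16 * l) -> 1 < tau -> 1 <= l ->
  64 * tau < C + 1 -> R0 - 1 < 2 * tau -> 2 * tau <= R0 ->
  0 <= Sa -> 0 <= Sb -> 0 <= Bn -> 0 <= BE -> 0 <= aj -> 0 <= e_ -> 0 < d ->
  tau * (aj + BE) <= e_.
Proof.
move=> H1 H2 H3 H4 H5 H6 H7 H8 H9 H10 H11 H12 H13 H14 H15 H16 H17 P1 P2 P3 P4 P5 P6 P7.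
have l0 : 0 < l by lra.
have hd : d = 16 * l * tau by rewrite H12; field; lra.
have hU : U0 <= mj / 2.
  have a1 : Bn * (R0 - 1) <= Bn * (2 * tau) by apply: Rmult_le_compat_l; lra.
  have a2 : Bn * (2 * tau) = m / (8 * l) by rewrite H9 hd; field; lra.
  have a3 : m / (8 * l) = (m / (4 * l)) / 2 by field; lra.
  lra.
have hC : 63 * tau <= C by lra.
have hSa : Sa * (63 * tau) <= e_ by apply: Rle_trans H3; apply: Rmult_le_compat_l; lra.
have hSb : Sb * (63 * tau) <= e_ by apply: Rle_trans H5; apply: Rmult_le_compat_l; lra.
have k0 : 0 < k by nra.
have hk : 8 * tau <= k.
  have : d >= 16 * tau by rewrite hd; nra.
  lra.
have key : 63 * tau * mj <= 2 * e_ * (63 * tau + 4 * k + d).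
  have b1 : mj / 2 <= e_ + Sa * (4 * k) + Sb * d by lra.
  have b2 : 63 * tau * (mj / 2) <= 63 * tau * (e_ + Sa * (4 * k) + Sb * d)
    by apply: Rmult_le_compat_l; lra.
  have b3 : 63 * tau * (Sa * (4 * k)) <= 4 * k * e_ by nra.
  have b4 : 63 * tau * (Sb * d) <= d * e_ by nra.
  nra.
have hA : tau * aj <= e_ / 2.
  have c1 : 63 * tau * (aj * k) <= 2 * e_ * (63 * tau + 4 * k + d).
    apply: Rle_trans key; apply: Rmult_le_compat_l; lra.
  have c2 : 2 * e_ * (63 * tau + 4 * k + d) <= 2 * e_ * (63 * k * (47 / 126)).
    apply: Rmult_le_compat_l; lra.
  have c3 : 63 * k * (tau * aj) <= 63 * k * (e_ / 2) by nra.
  apply: (Rmult_le_reg_l (63 * k)); lra.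
have hB : tau * BE <= e_ / 2.
  have : BE * (2 * tau) <= e_ by apply: Rle_trans H7; apply: Rmult_le_compat_l; lra.
  lra.
lra.
Qed.

End RealCore.

Lemma degT (T : finType) (e : rel T) x : deg_in setT e x = #|[set y | e x y]|.
Proof. by apply: eq_card => y; rewrite !inE. Qed.

Lemma nedges_pairs (T : finType) (S : {set T}) (F : rel T) :
  nedges_in S F = (INR (\sum_(x in S) deg_in S F x) / 2)%R.
Proof. by rewrite /nedges_in pairs_deg. Qed.

Lemma avg_ge (T : finType) (S : {set T}) (F : rel T) (t : nat) :
  S != set0 -> (forall x, x \in S -> (t <= deg_in S F x)%N) ->
  (INR t <= avg_deg S F)%R.
Proof.
move=> S0 Ht; rewrite /avg_deg nedges_pairs.
have cS : (0 < INR #|S|)%R by apply: (INR_ltn (m := 0)); rewrite card_gt0.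
have := sum_ge_R (P := fun x => x \in S) (f := deg_in S F) (x := INR t)
  ltac:(by move=> x xS; apply: INR_len; apply: Ht).
move=> h.
have -> : (2 * (INR (\sum_(x in S) deg_in S F x) / 2) / INR #|S| =
          INR (\sum_(x in S) deg_in S F x) / INR #|S|)%R by field; lra.
apply: (Rmult_le_reg_r (INR #|S|)) => //.
have -> : (INR (\sum_(x in S) deg_in S F x) / INR #|S| * INR #|S| =
          INR (\sum_(x in S) deg_in S F x))%R by field; lra.
by rewrite Rmult_comm.
Qed.

Lemma trivial_case (T : finType) (e : rel T) (L : R) (delta : nat) a y :
  simple_graph e -> e a y ->
  (INR delta / (16 * log2 L) <= 1)%R ->
  exists (S : {set T}) (F : rel T),
    is_subgraph e S F /\ almost_regular 64 S F /\
    (INR delta / (16 * log2 L) <= avg_deg S F)%R.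
Proof.
move=> [esym irr] eay Ht.
have ay : a != y by apply/eqP => h; move: eay; rewrite h irr.
have dg : forall x, x \in [set a; y] -> deg_in [set a; y] e x = 1%N.
  move=> x /set2P[->|->]; rewrite /deg_in.
    rewrite -(cards1 y); apply: eq_card => z; rewrite !inE.
    case: (eqVneq z y) => [->|zy]; first by rewrite eay orbT.
    by case: (eqVneq z a) => [->|]; rewrite ?irr //= andbF.
  rewrite -(cards1 a); apply: eq_card => z; rewrite !inE.
  case: (eqVneq z a) => [->|za]; first by rewrite esym eay.
  by case: (eqVneq z y) => [->|]; rewrite ?irr //= ?andbF.
exists [set a; y], e; split; [|split].
- split; first by apply/set0Pn; exists a; rewrite set21.
  by split => // x z _ _.
- by move=> x z xS zS; rewrite (dg x xS) (dg z zS) /=; lra.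
- apply: Rle_trans Ht _.
  have := @avg_ge T [set a; y] e 1 ltac:(by apply/set0Pn; exists a; rewrite set21)
    ltac:(by move=> x xS; rewrite dg).
  by rewrite /=.
Qed.

Theorem lemma3p5 (T : finType) (e : rel T) (L : R) (delta : nat) :
  simple_graph e ->
  (2 <= INR delta)%R -> (INR delta <= L)%R ->
  almost_biregular L delta e ->
  exists (S : {set T}) (F : rel T),
    is_subgraph e S F /\ almost_regular 64 S F /\
    (INR delta / (16 * log2 L) <= avg_deg S F)%R.
Proof.
move=> sg d2 dL [A [B [A0 [dAB [cov [cross [Bdeg [hD hmax]]]]]]]].
have [esym irr] := sg.
set d := fun x => #|[set y | e x y]|.
have inB : forall x, (x \in B) = (x \notin A).
  move=> x; case: (boolP (x \in A)) => xA /=.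
    by apply/negP => xB; move: dAB; rewrite disjoint_subset => /subsetP /(_ _ xA); rewrite inE xB.
  have : x \in A :|: B by rewrite cov inE.
  by rewrite inE (negbTE xA).
have crossA : forall a b, a \in A -> e a b -> b \in B.
  move=> a b aA eab; case: (cross _ _ eab) => [[]//|[aB _]].
  by move: aB; rewrite inB aA.
have crossB : forall a b, b \in B -> e a b -> a \in A.
  move=> a b bB eab; case: (cross _ _ eab) => [[]//|[_ bA]].
  by move: bB; rewrite inB bA.
set M := \sum_(a in A) d a.
have sumB : \sum_(b in B) d b = M.
  rewrite /M.
  transitivity (#|[set p : T * T | (p.1 \in B) && e p.1 p.2]|).
    by rewrite (card_pairs (fun x y => (x \in B) && e x y)) sum_cond_card.
  rewrite (card_pairs2 (fun x y => (x \in B) && e x y)) [RHS]big_mkcond.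
  apply: eq_bigr => y _; case: (boolP (y \in A)) => yA.
    apply: eq_card => x; rewrite !inE (esym y x); case: (boolP (e x y)) => exy; rewrite ?andbF ?andbT //.
    by rewrite inB; apply/negP => xA; move: (crossA _ _ xA exy); rewrite inB yA.
  apply/eqP; rewrite cards_eq0; apply/eqP/setP => x; rewrite !inE.
  apply/negP => /andP[xB exy]; have := crossB y x xB ltac:(by rewrite esym).
  by rewrite (negbTE yA).
have Md : M = #|B| * delta.
  rewrite -sumB -sum_nat_const; apply: eq_bigr => b bB.
  by rewrite /d -degT; apply: Bdeg.
have ned : nedges_in setT e = INR M.
  rewrite nedges_pairs.
  have -> : \sum_(x in setT) deg_in setT e x = M + M.
    rewrite (eq_bigr (fun x => d x)); last by move=> x _; rewrite degT.
    rewrite (eq_bigl xpredT); last by move=> x; rewrite inE.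
    rewrite (bigID (fun x => x \in A)) /=; congr (_ + _).
    by rewrite -sumB; apply: eq_bigl => x; rewrite inB.
  rewrite INR_addn; lra.
have cA : (0 < #|A|)%N by rewrite card_gt0.
have cAR : (0 < INR #|A|)%R by apply: (INR_ltn (m := 0)).
set m := INR M in ned.
rewrite ned in hD hmax.
have m0 : (0 < m)%R.
  have : (2 <= m / INR #|A|)%R by lra.
  move=> h; have : (2 * INR #|A| <= m)%R.
    have -> : m = (m / INR #|A| * INR #|A|)%R by field; lra.
    by apply: Rmult_le_compat_r; lra.
  lra.
have L2 : (2 <= L)%R by lra.
have l1 := log2_ge1 L2.
set tau := (INR delta / (16 * log2 L))%R.
have tau0 : (0 <= tau)%R by rewrite /tau; apply: Rlt_le; apply: Rdiv_lt_0_compat; lra.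
case: (Rle_lt_dec tau 1) => htau.
  have [a [aA da]] : exists a, a \in A /\ (0 < d a)%N.
    apply: NNPP => hn.
    have : M = 0%N.
      rewrite /M big1 // => a aA; apply/eqP; rewrite -leqn0 leqNgt; apply/negP => h.
      by apply: hn; exists a.
    move=> h; rewrite /m h /= in m0; lra.
  move: da; rewrite /d card_gt0 => /set0Pn[y]; rewrite inE => eay.
  exact: (trivial_case sg eay htau).
have hmax' : forall a, a \in A -> (INR (d a) <= L * (m / INR #|A|))%R.
  by move=> a aA; rewrite /d -degT; apply: hmax.
have [k [hk hmj]] := @pigeon T A d L cA m0 L2 hmax'.
rewrite -/M -/m in hk hmj.
set Aj := [set a in A | cls k (d a)].
have mjE : \sum_(a in Aj) d a = \sum_(a in A | cls k (d a)) d a.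
  by apply: eq_bigl => a; rewrite inE.
rewrite -mjE in hmj.
have [t [ht1 ht2]] := @ceil_nat tau tau0.
have [C [hC1 hC2]] := @floor_nat (64 * tau) ltac:(lra).
have [R0 [hR1 hR2]] := @ceil_nat (2 * tau) ltac:(lra).
have R0p : (0 < R0)%N by apply: INR_ltn_inv; rewrite INR_0; lra.
have R0C : (R0 <= C)%N by apply: INR_len_inv; lra.
have t1 : (1 <= t)%N by apply: INR_len_inv; rewrite /= ; lra.
have valid0 : validb e Aj B C R0 set0.
  apply/and4P; split.
  - by apply/forall_inP => p; rewrite inE.
  - apply/forallP => a; rewrite /dA (eq_card (B := (set0 : {set T}))) ?cards0 //.
    by move=> b; rewrite !inE.
  - apply/forallP => a; rewrite /dB (eq_card (B := (set0 : {set T}))) ?cards0 //.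
    by move=> b; rewrite !inE.
  - apply/forallP => a; rewrite /dB (eq_card (B := (set0 : {set T}))) ?cards0 //.
    by move=> b; rewrite !inE.
have [E [VE Emax]] := @exists_max _ (validb e Aj B C R0) (fun E => #|E|) set0 valid0.
have AjA : forall a, a \in Aj -> a \in A by move=> a; rewrite inE => /andP[].
have disj : [disjoint Aj & B].
  rewrite disjoint_subset; apply/subsetP => x /AjA xA; by rewrite !inE inB xA.
have crossAj : forall a b, a \in Aj -> e a b -> b \in B.
  by move=> a b /AjA; apply: crossA.
have CM := count_main esym crossAj VE Emax.
have CMR := INR_len CM; rewrite !INR_addn in CMR.
have C1 : (1 <= C)%N by apply: leq_trans R0C.
have H2 : (INR (\sum_(a in Aj | (C <= dA E a)%N) #|[set y | e a y]|) <=
           INR #|[pred a | (a \in Aj) && (C <= dA E a)%N]| * (4 * k))%R.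
  apply: sum_le_R => a /andP[aAj _]; move: aAj; rewrite inE /cls => /andP[_ /andP[_ /ltRbP h]].
  by apply: Rlt_le.
have H3 : (INR #|[pred a | (a \in Aj) && (C <= dA E a)%N]| * INR C <= INR #|E|)%R.
  apply: Rle_trans (sum_ge_R (P := [pred a | (a \in Aj) && (C <= dA E a)%N]) (f := dA E) (x := INR C) _) _.
    by move=> a /andP[_ h]; apply: INR_len.
  apply: INR_len; rewrite (cardE_dA E); exact: sum_sub_le.
have H4 : (INR (\sum_(b | (C <= dB E b)%N) #|[set y | e b y]|) <=
           INR #|[pred b | (C <= dB E b)%N]| * INR delta)%R.
  apply: sum_le_R => b hb.
  have bB : b \in B by apply: (dB_pos VE); apply: leq_trans hb.
  by rewrite -degT Bdeg //; apply: Rle_refl.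
have H5 : (INR #|[pred b | (C <= dB E b)%N]| * INR C <= INR #|E|)%R.
  apply: Rle_trans (sum_ge_R (P := [pred b | (C <= dB E b)%N]) (f := dB E) (x := INR C) _) _.
    by move=> b h; apply: INR_len.
  apply: INR_len; rewrite (cardE_dB E); exact: sum_sub_le.
have H6 : (INR (\sum_(b in B | dB E b == 0%N) #|Uset e Aj C E b|) <= INR #|B| * (INR R0 - 1))%R.
  apply: Rle_trans (sum_le_R (P := [pred b | (b \in B) && (dB E b == 0%N)])
     (f := fun b => #|Uset e Aj C E b|) (x := (INR R0 - 1)%R) _) _.
    move=> b /andP[bB /eqP b0]; have := M2 VE Emax R0p R0C bB b0.
    move/INR_len; rewrite S_INR; lra.
  apply: Rmult_le_compat_r.
    have : (1 <= INR R0)%R by apply: (INR_len (m := 1)).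
    lra.
  by apply: INR_len; apply: subset_leq_card; apply/subsetP => x; rewrite !inE => /andP[].
have H7 : (INR #|[pred b | (0 < dB E b)%N]| * INR R0 <= INR #|E|)%R.
  apply: Rle_trans (sum_ge_R (P := [pred b | (0 < dB E b)%N]) (f := dB E) (x := INR R0) _) _.
    by move=> b h; apply: INR_len; apply: (valid_dB_pos VE).
  apply: INR_len; rewrite (cardE_dB E); exact: sum_sub_le.
have H8 : (INR #|Aj| * k <= INR (\sum_(a in Aj) #|[set y | e a y]|))%R.
  apply: sum_ge_R => a aAj; have : a \in Aj by exact: aAj.
  rewrite inE /cls => /andP[_ /andP[/leRbP h _]].
  exact: h.
have H9 : m = (INR delta * INR #|B|)%R by rewrite /m Md INR_muln Rmult_comm.
rewrite /d in hmj.
have H11 : (INR delta / 2 <= k)%R by lra.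
have core := @real_core _ _ _ _ _ _ _ _ _ _ _ _ _ _ _ _ _ CMR H2 H3 H4 H5 H6 H7 H8 H9 hmj H11 (erefl tau) htau l1
  ltac:(lra) ltac:(lra) ltac:(lra) (pos_INR _) (pos_INR _) (pos_INR _) (pos_INR _)
  (pos_INR _) (pos_INR _) ltac:(lra).
set S0 := Aj :|: [set b | (0 < dB E b)%N].
have hS0 : forall p, p \in E -> (p.1 \in S0) && (p.2 \in S0).
  move=> p pE; move: (VE) => /and4P[/forall_inP HV _ _ _]; move: (HV p pE) => /and3P[p1 _ _].
  apply/andP; split; first by apply/setUP; left.
  apply/setUP; right; rewrite inE /dB card_gt0; apply/set0Pn; exists p.1.
  by rewrite inE -surjective_pairing.
have sumS := sum_Fr_ge VE disj hS0.
have cS0 : (#|S0| <= #|Aj| + #|[pred b | (0 < dB E b)%N]|)%N.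
  apply: leq_trans (leq_card_setU _ _).1 _; rewrite leq_add2l.
  by apply: eq_leq; apply: eq_card => b; rewrite !inE.
have Aj0 : (0 < #|Aj|)%N.
  case: (posnP #|Aj|) => // h; move/eqP: h; rewrite cards_eq0 => /eqP h0.
  move: hmj; rewrite h0 big_set0 INR_0 => hmj'.
  have : (0 < m / (4 * log2 L))%R by apply: Rdiv_lt_0_compat; lra.
  lra.
have S0p : (0 < #|S0|)%N.
  by apply: leq_trans Aj0 _; apply: subset_leq_card; apply: subsetUl.
have Hpeel : (2 * (t - 1) * #|S0| < \sum_(x in S0) deg_in S0 (Fr E) x)%N.
  apply: (@leq_trans (2 * #|E|)); last exact: sumS.
  apply: INR_ltn_inv; rewrite !INR_muln minus_INR //.
  have r1 := INR_len cS0; rewrite INR_addn in r1.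
  have r2 : (0 < INR #|S0|)%R by apply: (INR_ltn (m := 0)).
  have r3 : ((INR t - 1) * INR #|S0| < tau * INR #|S0|)%R.
    by apply: Rmult_lt_compat_r; lra.
  have r4 : (tau * INR #|S0| <= tau * (INR #|Aj| + INR #|[pred b | (0 < dB E b)%N]|))%R.
    by apply: Rmult_le_compat_l; lra.
  rewrite /=. set eE := INR #|E| in core *. set sS := INR #|S0| in r1 r2 r3 r4 *. set bb := INR #|[pred b | (0 < dB E b)%N]| in core r1 r4. lra.
  by apply/leP.
have FrSym : forall x y, Fr E x y = Fr E y x by move=> x y; rewrite /Fr orbC.
have [S [SS [Sn Sd]]] := @peel T (Fr E) FrSym t #|S0| S0 (erefl _) Hpeel.
exists S, (Fr E); split; [|split].
- split => //; split => // x y _ _.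
  move: (VE) => /and4P[/forall_inP HV _ _ _].
  rewrite /Fr => /orP[] h; move: (HV _ h) => /and3P[_ _] //=.
  by rewrite esym.
- move=> x y xS yS.
  have h1 := INR_len (deg_Fr_le S x VE disj).
  have h2 := INR_len (Sd y yS).
  lra.
- have := avg_ge Sn Sd; lra.
Qed.
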